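(* Let $f(x)=\frac1n\sum_{i=1}^n f_i(x)$ where each $f_i:\mathbb{R}^d\to\mathbb{R}$ is differentiable and $\mu_i$-strongly convex with $\mu_i>0$, and let $x_\star$ be the minimizer of $f$. Let $\mathcal{S}$ be a probability distribution over subsets of $[n]$, let $S\sim\mathcal{S}$, $p_i:=\Pr(i\in S)$ and $p_C:=\Pr(S=C)$, and assume $S$ is proper ($p_i>0$ for all $i$) and nonvacuous ($\Pr(S=\varnothing)=0$). For $C\subseteq[n]$ let $f_C(x):=\sum_{i\in C}\frac{1}{np_i}f_i(x)$, and define $$\mu_{\rm AS}:=\min_{C\subseteq[n],\,p_C>0}\sum_{i\in C}\frac{\mu_i}{np_i},\qquad \sigma_{\star,\rm AS}^2:=\sum_{C\subseteq[n],\,p_C>0}p_C\Big\|\sum_{i\in C}\frac{1}{np_i}\nabla f_i(x_\star)\Big\|^2.$$ Consider SPPM-AS: from arbitrary $x_0\in\mathbb{R}^d$, at each step sample $S_k\sim\mathcal{S}$ independently of the past and set $x_{k+1}=\operatorname{prox}_{\gamma f_{S_k}}(x_k)$. Then for any $\gamma>0$ and $k\ge0$, $$\mathbb{E}\|x_k-x_\star\|^2\le\left(\frac{1}{1+\gamma\mu_{\rm AS}}\right)^{2k}\|x_0-x_\star\|^2+\frac{\gamma\sigma_{\star,\rm AS}^2}{\gamma\mu_{\rm AS}^2+2\mu_{\rm AS}}.$$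
   Context: $\operatorname{prox}_{\gamma\phi}(y):=\arg\min_{x\in\mathbb{R}^d}\{\phi(x)+\frac{1}{2\gamma}\|x-y\|^2\}$. $\mu$-strong convexity of $g$: $g(y)+\langle\nabla g(y),x-y\rangle+\frac{\mu}{2}\|x-y\|^2\le g(x)$ for all $x,y$. *)

(* Defs.v *)
From HB Require Import structures.
From mathcomp Require Import all_boot all_order all_algebra.
From mathcomp Require Import all_classical all_reals all_analysis.
Set Implicit Arguments. Unset Strict Implicit. Unset Printing Implicit Defensive.
Import Order.TTheory GRing.Theory Num.Theory.
Import numFieldNormedType.Exports.
Local Open Scope ring_scope.

Section Defs.
Variables (R : realType) (d n : nat).

Definition dotv (u v : 'rV[R]_d) : R := (u *m v^T) 0 0.
Definition sqnorm (u : 'rV[R]_d) : R := dotv u u.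

Definition has_gradient (g : 'rV[R]_d -> R) (grad : 'rV[R]_d -> 'rV[R]_d) :=
  forall x, differentiable g x /\ forall h, 'd g x h = dotv (grad x) h.

Definition strongly_convex (g : 'rV[R]_d -> R) (grad : 'rV[R]_d -> 'rV[R]_d)
  (mu : R) := forall x y,
  g y + dotv (grad y) (x - y) + mu / 2 * sqnorm (x - y) <= g x.

Definition is_prox (phi : 'rV[R]_d -> R) (gamma : R) (y xp : 'rV[R]_d) :=
  forall x, phi xp + (2 * gamma)^-1 * sqnorm (xp - y)
            <= phi x + (2 * gamma)^-1 * sqnorm (x - y).

Definition incl_prob (pS : {set 'I_n} -> R) (i : 'I_n) : R :=
  \sum_(C : {set 'I_n} | i \in C) pS C.

Definition fC (pS : {set 'I_n} -> R) (f : 'I_n -> 'rV[R]_d -> R)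
  (C : {set 'I_n}) (x : 'rV[R]_d) : R :=
  \sum_(i in C) (n%:R * incl_prob pS i)^-1 * f i x.

Definition muC (pS : {set 'I_n} -> R) (mu : 'I_n -> R) (C : {set 'I_n}) : R :=
  \sum_(i in C) mu i / (n%:R * incl_prob pS i).

(* The neutral element muC [set: 'I_n]
   is an upper bound of every muC C since all terms are positive, and at least one
   C has p_C > 0, so this big min is exactly the paper's min. *)
Definition mu_AS (pS : {set 'I_n} -> R) (mu : 'I_n -> R) : R :=
  \big[Order.min/muC pS mu [set: 'I_n]]_(C : {set 'I_n} | 0 < pS C) muC pS mu C.

Definition sigma2_AS (pS : {set 'I_n} -> R) (gf : 'I_n -> 'rV[R]_d -> 'rV[R]_d)
  (xs : 'rV[R]_d) : R :=
  \sum_(C : {set 'I_n} | 0 < pS C)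
     pS C * sqnorm (\sum_(i in C) (n%:R * incl_prob pS i)^-1 *: gf i xs).

(* SPPM-AS iterate after the sampled sets S_0, ..., S_{k-1} (listed in order),
   where prox C y = prox_{gamma f_C}(y). *)
Definition sppm_iter (prox : {set 'I_n} -> 'rV[R]_d -> 'rV[R]_d)
  (x0 : 'rV[R]_d) (s : seq {set 'I_n}) : 'rV[R]_d :=
  foldl (fun x C => prox C x) x0 s.

(* E ||x_k - x_star||^2 with S_0..S_{k-1} i.i.d. ~ pS: expectation over the
   finite product distribution on k-tuples of subsets. *)
Definition expected_sqdist (k : nat) (pS : {set 'I_n} -> R)
  (prox : {set 'I_n} -> 'rV[R]_d -> 'rV[R]_d) (x0 xs : 'rV[R]_d) : R :=
  \sum_(s : k.-tuple {set 'I_n})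
     (\prod_(C <- s) pS C) * sqnorm (sppm_iter prox x0 s - xs).

End Defs.

(* Main.v *)
Require Import Defs.
From HB Require Import structures.
From mathcomp Require Import all_boot all_order all_algebra.
From mathcomp Require Import all_classical all_reals all_analysis.
From mathcomp Require Import ring lra.
Import Order.TTheory GRing.Theory Num.Theory.
Import numFieldNormedType.Exports.
Set Implicit Arguments. Unset Strict Implicit.
Local Open Scope ring_scope.



Section Dot.
Variables (R : realType) (d : nat).
Implicit Types u v w : 'rV[R]_d.

Lemma dotvE u v : dotv u v = \sum_j u 0 j * v 0 j.
Proof. by rewrite /dotv !mxE; apply: eq_bigr => j _; rewrite !mxE. Qed.

Lemma dotvC u v : dotv u v = dotv v u.
Proof. by rewrite !dotvE; apply: eq_bigr => j _; rewrite mulrC. Qed.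

Lemma dotvDl u v w : dotv (u + v) w = dotv u w + dotv v w.
Proof. by rewrite !dotvE -big_split; apply: eq_bigr => j _; rewrite !mxE mulrDl. Qed.

Lemma dotvZl a u w : dotv (a *: u) w = a * dotv u w.
Proof. by rewrite !dotvE mulr_sumr; apply: eq_bigr => j _; rewrite !mxE mulrA. Qed.

Lemma dotvNl u w : dotv (- u) w = - dotv u w.
Proof. by rewrite -scaleN1r dotvZl mulN1r. Qed.

Lemma dotvBl u v w : dotv (u - v) w = dotv u w - dotv v w.
Proof. by rewrite dotvDl dotvNl. Qed.

Lemma dotvDr u v w : dotv w (u + v) = dotv w u + dotv w v.
Proof. by rewrite dotvC dotvDl !(dotvC w). Qed.
Lemma dotvZr a u w : dotv w (a *: u) = a * dotv w u.
Proof. by rewrite dotvC dotvZl dotvC. Qed.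
Lemma dotvNr u w : dotv w (- u) = - dotv w u.
Proof. by rewrite dotvC dotvNl dotvC. Qed.
Lemma dotvBr u v w : dotv w (u - v) = dotv w u - dotv w v.
Proof. by rewrite dotvDr dotvNr. Qed.

Lemma dotv_sumr (I : finType) (P : pred I) (F : I -> 'rV[R]_d) w :
  dotv w (\sum_(i | P i) F i) = \sum_(i | P i) dotv w (F i).
Proof.
apply: (big_morph (dotv w)); first by move=> x y; rewrite dotvDr.
by rewrite dotvE big1 // => j _; rewrite mxE mulr0.
Qed.

Lemma sqnorm_ge0 u : 0 <= sqnorm u.
Proof. by rewrite /sqnorm dotvE sumr_ge0 // => j _; rewrite -expr2 sqr_ge0. Qed.

Lemma sqnormE a b u v : sqnorm (a *: u + b *: v) =
  a ^+ 2 * sqnorm u + 2 * a * b * dotv u v + b ^+ 2 * sqnorm v.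
Proof.
rewrite /sqnorm !(dotvDl, dotvDr, dotvZl, dotvZr) (dotvC v u); ring.
Qed.

End Dot.



Section Prox.
Variables (R : realType) (d : nat).

Lemma small_t (A B : R) : 0 <= B -> (forall t, 0 < t -> t < 1 -> A <= t * B) -> A <= 0.
Proof.
move=> B0 H; rewrite leNgt; apply/negP => A0.
pose t := A / (2 * (A + B)).
have hAB : 0 < A + B by lra.
have ht : t * (2 * (A + B)) = A by rewrite /t mulrVK // unitfE; lra.
have t0 : 0 < t by rewrite /t divr_gt0 //; lra.
have t1 : t < 1 by nra.
have := H t t0 t1; nra.
Qed.

Lemma prox_contract (phi : 'rV[R]_d -> R) g (m gamma : R) y z xs :
  0 <= m -> 0 < gamma -> strongly_convex phi g m -> is_prox phi gamma y z ->
  (1 + gamma * m) ^+ 2 * sqnorm (z - xs) <= sqnorm (y - xs - gamma *: g xs).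
Proof.
move=> m0 g0 SC PR.
set P := z - xs; set Q := y - xs.
set k := (2 * gamma)^-1.
have k0 : 0 < k by rewrite /k invr_gt0; lra.
have hk : k * (2 * gamma) = 1 by rewrite /k mulVf //; lra.
have SCx := SC z xs.
have Ezy : z - y = 1 *: P + (-1) *: Q.
  by apply/rowP => j; rewrite !mxE; ring.
have PRx := PR xs.
have Exy : xs - y = 0 *: P + (-1) *: Q.
  by apply/rowP => j; rewrite !mxE; ring.
rewrite Ezy Exy !sqnormE -/k in PRx.
have A0 : forall t, 0 < t -> t < 1 ->
   dotv (g xs) P + (m + 2 * k) * sqnorm P - 2 * k * dotv P Q
   <= t * ((m / 2 + k) * sqnorm P).
  move=> t t0 t1.
  set w := z + t *: (xs - z).
  have h1 := SC z w.
  have h2 := SC xs w.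
  have h3 := PR w.
  have E1 : z - w = t *: P + 0 *: Q by apply/rowP => j; rewrite !mxE; ring.
  have E2 : xs - w = (t - 1) *: P + 0 *: Q by apply/rowP => j; rewrite !mxE; ring.
  have E3 : w - y = (1 - t) *: P + (-1) *: Q by apply/rowP => j; rewrite !mxE; ring.
  rewrite E1 !sqnormE !dotvDr !dotvZr in h1.
  rewrite E2 !sqnormE !dotvDr !dotvZr in h2.
  rewrite E3 Ezy !sqnormE -/k in h3.
  rewrite -/P in SCx.
  set a := dotv (g w) P in h1 h2.
  have t1' : 0 <= 1 - t by rewrite subr_ge0 ltW.
  have h1' := ler_wpM2l t1' h1.
  have h2' := ler_wpM2l (ltW t0) h2.
  have h4' := ler_wpM2l (ltW t0) SCx.
  suff : t * (dotv (g xs) P + (m + 2 * k) * sqnorm P - 2 * k * dotv P Q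
   - t * ((m / 2 + k) * sqnorm P)) <= 0.
    by rewrite pmulr_rle0 // subr_le0.
  have kk : k * 2 * gamma = 1 by rewrite -mulrA.
  lra.
have Bp : 0 <= (m / 2 + k) * sqnorm P.
  by apply: mulr_ge0; [lra | exact: sqnorm_ge0].
have A1 := small_t Bp A0.
have A2 := ler_wpM2l (ltW g0) A1.
have Hs := sqnorm_ge0 ((1 + gamma * m) *: P + (-1) *: (y - xs - gamma *: g xs)).
rewrite sqnormE dotvBr dotvZr in Hs.
rewrite (dotvC (g xs)) in A2.
have c0 : 0 <= 1 + gamma * m by nra.
have A3 : (1 + gamma * m) * sqnorm P <= dotv P Q - gamma * dotv P (g xs).
  have e : gamma * (2 * k) = 1 by apply: etrans hk; ring.
  have e1 : gamma * (2 * k) * sqnorm P = sqnorm P by rewrite e mul1r.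
  have e2 : gamma * (2 * k) * dotv P Q = dotv P Q by rewrite e mul1r.
  lra.
have A4 := ler_wpM2l c0 A3.
nra.
Qed.
End Prox.



Section Grad.
Variables (R : realType) (d n : nat).

Lemma grad_zero (f : 'I_n -> 'rV[R]_d -> R) gf xs :
  (forall i, has_gradient (f i) (gf i)) ->
  (forall x, \sum_i f i xs <= \sum_i f i x) ->
  forall u, dotv u (\sum_i gf i xs) = 0.
Proof.
move=> hg hmin u.
pose F := \sum_(i < n) f i.
have FE : forall x, F x = \sum_i f i x by move=> x; rewrite /F fct_sumE.
have Fd : forall x, differentiable F x.
  by move=> x; apply: differentiable_sum => i; case: (hg i x).
pose G := fun t : R => F (t *: u + xs).
have E : forall a : R, (fun h : R => h^-1 *: ((G \o shift a) (h *: 1) - G a)) =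
   (fun h : R => h^-1 *: ((F \o shift (a *: u + xs)) (h *: u) - F (a *: u + xs))).
  move=> a; apply: funext => h /=; rewrite /G /=.
  congr (_ *: (F _ - _)).
  by rewrite [h *: 1]mulr1 scalerDl addrA.
have Gd : forall a, derivable G a 1.
  by move=> a; rewrite /derivable E; exact: (diff_derivable (Fd _)).
have GD : 'D_1 G 0 = 'D_u F xs.
  by rewrite /derive E scale0r add0r.
have Hd : is_derive (0 : R) 1 G 0.
  apply: (derive1_at_min (a := -1) (b := 1)).
  - lra.
  - by move=> t _; exact: Gd.
  - by rewrite in_itv /=; apply/andP; split; lra.
  - move=> t _; rewrite /G !FE scale0r add0r; exact: hmin.
have H0 : 'D_1 G 0 = 0 by exact: derive_val.
move: H0; rewrite GD /F derive_sum; last first.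
  by move=> i; apply: diff_derivable; case: (hg i xs).
rewrite (eq_bigr (fun i => dotv (gf i xs) u)); last first.
  by move=> i _; case: (hg i xs) => D1 D2; rewrite deriveE // D2.
move=> H; rewrite dotv_sumr -[RHS]H; apply: eq_bigr => i _; exact: dotvC.
Qed.
End Grad.



Definition gC (R : realType) (d n : nat) (pS : {set 'I_n} -> R)
  (gf : 'I_n -> 'rV[R]_d -> 'rV[R]_d) (C : {set 'I_n}) (x : 'rV[R]_d) :=
  \sum_(i in C) (n%:R * incl_prob pS i)^-1 *: gf i x.

Lemma dotv_suml (R : realType) (d : nat) (I : finType) (P : pred I)
  (F : I -> 'rV[R]_d) w :
  dotv (\sum_(i | P i) F i) w = \sum_(i | P i) dotv (F i) w.
Proof. by rewrite dotvC dotv_sumr; apply: eq_bigr => i _; rewrite dotvC. Qed.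

Lemma SC_fC (R : realType) (d n : nat) (f : 'I_n -> 'rV[R]_d -> R) gf mu pS (C : {set 'I_n}) :
  (forall i, strongly_convex (f i) (gf i) (mu i)) ->
  (forall i, 0 < incl_prob pS i) ->
  strongly_convex (fC pS f C) (gC pS gf C) (muC pS mu C).
Proof.
move=> SC pp x y; rewrite /fC /gC /muC dotv_suml !mulr_suml -!big_split /=.
apply: ler_sum => i _.
have c0 : 0 <= (n%:R * incl_prob pS i)^-1.
  rewrite invr_ge0 mulr_ge0 // ?ler0n //; exact: ltW.
have := ler_wpM2l c0 (SC i x y).
rewrite dotvZl; set c := (_^-1); lra.
Qed.

Lemma muC_gt0 (R : realType) (n : nat) (mu : 'I_n -> R) (pS : {set 'I_n} -> R) (C : {set 'I_n}) :
  (forall i, 0 < mu i) -> (forall i, 0 < incl_prob pS i) ->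
  C != finset.set0 -> 0 < muC pS mu C.
Proof.
move=> mu0 pp /set0Pn [i iC]; rewrite /muC (bigD1 i) //=.
have n0 : (0 < n)%N := leq_ltn_trans (leq0n i) (ltn_ord i).
apply: ltr_pwDl.
  by rewrite divr_gt0 // mulr_gt0 // ltr0n.
apply: sumr_ge0 => j _; apply: ltW; rewrite divr_gt0 // mulr_gt0 // ltr0n.
exact: n0.
Qed.

Lemma muAS_le (R : realType) (n : nat) (mu : 'I_n -> R) (pS : {set 'I_n} -> R)
  (C : {set 'I_n}) : 0 < pS C -> mu_AS pS mu <= muC pS mu C.
Proof. by move=> pC; rewrite /mu_AS (bigD1 C) //= ge_min lexx. Qed.

Lemma muAS_gt0 (R : realType) (n : nat) (mu : 'I_n -> R) (pS : {set 'I_n} -> R) :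
  (forall i, 0 < mu i) -> (forall i, 0 < incl_prob pS i) ->
  pS finset.set0 = 0 -> (0 < n)%N -> 0 < mu_AS pS mu.
Proof.
move=> mu0 pp p0 n0; rewrite /mu_AS.
apply: (big_ind (fun x => 0 < x)).
- apply: muC_gt0 => //; apply/set0Pn; exists (Ordinal n0); by rewrite finset.in_setT.
- by move=> x y x0 y0; rewrite lt_min x0 y0.
- move=> C pC; apply: muC_gt0 => //; apply/eqP => C0; move: pC; rewrite C0 p0 ltxx //.
Qed.

Lemma n_pos (R : realType) (n : nat) (pS : {set 'I_n} -> R) :
  \sum_(C : {set 'I_n}) pS C = 1 -> pS finset.set0 = 0 -> (0 < n)%N.
Proof.
move=> s1 p0; case: (posnP n) => // n0; exfalso.
have : \sum_(C : {set 'I_n}) pS C = 0.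
  apply: big1 => C _; suff -> : C = finset.set0 by [].
  by apply/setP => i; have := ltn_ord i; rewrite {2}n0.
by rewrite s1 => /eqP; rewrite oner_eq0.
Qed.

Lemma cross0 (R : realType) (d n : nat) (pS : {set 'I_n} -> R)
  (gf : 'I_n -> 'rV[R]_d -> 'rV[R]_d) xs u :
  (forall i, 0 < incl_prob pS i) ->
  \sum_(C : {set 'I_n}) pS C * dotv u (gC pS gf C xs) =
  n%:R^-1 * dotv u (\sum_i gf i xs).
Proof.
move=> pp.
under eq_bigr => C _ do rewrite /gC dotv_sumr mulr_sumr.
rewrite (exchange_big_dep xpredT) //= dotv_sumr mulr_sumr.
apply: eq_bigr => i _.
under eq_bigr => C _ do rewrite dotvZr mulrA.
rewrite -mulr_suml -mulr_suml -[X in X / _]/(incl_prob pS i).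
by rewrite invfM mulrCA mulfV ?mulr1 //; exact: lt0r_neq0.
Qed.

Lemma sigma2E (R : realType) (d n : nat) (pS : {set 'I_n} -> R)
  (gf : 'I_n -> 'rV[R]_d -> 'rV[R]_d) xs :
  (forall C, 0 <= pS C) ->
  sigma2_AS pS gf xs = \sum_(C : {set 'I_n}) pS C * sqnorm (gC pS gf C xs).
Proof.
move=> pge; rewrite /sigma2_AS big_mkcond; apply: eq_bigr => C _ /=.
case: ifP => // /negbT; rewrite -leNgt => h.
have -> : pS C = 0 by apply/le_anti; rewrite h pge.
by rewrite mul0r.

Qed.

Lemma step (R : realType) (d n : nat) (f : 'I_n -> 'rV[R]_d -> R) gf mu xs
  (pS : {set 'I_n} -> R) (gamma : R) (prox : {set 'I_n} -> 'rV[R]_d -> 'rV[R]_d) :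
  (forall i, 0 < mu i) ->
  (forall i, strongly_convex (f i) (gf i) (mu i)) ->
  (forall u, dotv u (\sum_i gf i xs) = 0) ->
  (forall C, 0 <= pS C) -> \sum_(C : {set 'I_n}) pS C = 1 ->
  (forall i, 0 < incl_prob pS i) -> pS finset.set0 = 0 ->
  0 < gamma ->
  (forall C y, is_prox (fC pS f C) gamma y (prox C y)) ->
  forall x, \sum_(C : {set 'I_n}) pS C * sqnorm (prox C x - xs) <=
   ((1 + gamma * mu_AS pS mu)^-1) ^+ 2 *
     (sqnorm (x - xs) + gamma ^+ 2 * sigma2_AS pS gf xs).
Proof.
move=> mu0 SC gz pge s1 pp p0 g0 hprox x.
have n0 := n_pos s1 p0.
have m0 := muAS_gt0 mu0 pp p0 n0.
set m := mu_AS pS mu in m0 *.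
set A := (1 + gamma * m)^-1.
have c0 : 0 < 1 + gamma * m by have := mulr_gt0 g0 m0; lra.
have hA : A * (1 + gamma * m) = 1 by rewrite /A mulVf //; exact: lt0r_neq0.
apply: (@le_trans _ _ (\sum_(C : {set 'I_n}) pS C *
     (A ^+ 2 * sqnorm (x - xs - gamma *: gC pS gf C xs)))).
  apply: ler_sum => C _.
  have [hC|hC] := ltrP 0 (pS C); last first.
    have -> : pS C = 0 by apply/le_anti; rewrite hC pge.
    by rewrite !mul0r.
  apply: ler_wpM2l; first exact: ltW.
  have mC : m <= muC pS mu C by exact: muAS_le.
  have mC0 : 0 <= muC pS mu C by lra.
  have K := @prox_contract R d _ _ _ gamma x (prox C x) xs mC0 g0 (@SC_fC _ _ _ f gf mu pS C SC pp) (hprox C x).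
  have S0 := sqnorm_ge0 (prox C x - xs).
  have L1 : (1 + gamma * m) ^+ 2 * sqnorm (prox C x - xs) <=
            (1 + gamma * muC pS mu C) ^+ 2 * sqnorm (prox C x - xs).
    apply: ler_wpM2r => //.
    have gm := ler_wpM2l (ltW g0) mC.
    rewrite !expr2; nra.
  have A0 : 0 <= A ^+ 2 by rewrite exprn_ge0 // /A invr_ge0; lra.
  have L2 := ler_wpM2l A0 (le_trans L1 K).
  by rewrite mulrA -exprMn hA expr1n mul1r in L2.
rewrite (eq_bigr (fun C => pS C * (A ^+ 2 * (1 ^+ 2 * sqnorm (x - xs)
   + 2 * 1 * (- gamma) * dotv (x - xs) (gC pS gf C xs)
   + (- gamma) ^+ 2 * sqnorm (gC pS gf C xs))))); last first.
  by move=> C _; rewrite -sqnormE scale1r scaleNr.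
rewrite (_ : \sum_(C : {set 'I_n}) _ =
  A ^+ 2 * sqnorm (x - xs) * (\sum_(C : {set 'I_n}) pS C)
  + (- 2 * A ^+ 2 * gamma) * (\sum_(C : {set 'I_n}) pS C * dotv (x - xs) (gC pS gf C xs))
  + A ^+ 2 * gamma ^+ 2 * (\sum_(C : {set 'I_n}) pS C * sqnorm (gC pS gf C xs))).
  rewrite s1 cross0 // gz -sigma2E // !mulr0 addr0 mulr1.
  by rewrite le_eqVlt; apply/orP; left; apply/eqP; ring.
rewrite !mulr_sumr -!big_split /=; apply: eq_bigr => C _; ring.
Qed.

Lemma exp_succ (R : realType) (d n : nat) (k : nat) (pS : {set 'I_n} -> R)
  (prox : {set 'I_n} -> 'rV[R]_d -> 'rV[R]_d) x xs :
  expected_sqdist k.+1 pS prox x xs =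
  \sum_(C : {set 'I_n}) pS C * expected_sqdist k pS prox (prox C x) xs.
Proof.
rewrite /expected_sqdist.
pose h := fun p : {set 'I_n} * k.-tuple {set 'I_n} => [tuple of p.1 :: p.2].
have hb : bijective h.
  exists (fun t => (thead t, [tuple of behead t])).
    by case=> C s; congr pair; apply: val_inj.
  by move=> t; case/tupleP: t => C s; apply: val_inj.
rewrite (reindex h (onW_bij _ hb)) /= -(pair_big xpredT xpredT (fun C s =>
   (\prod_(C0 <- h (C, s)) pS C0) * sqnorm (sppm_iter prox x (h (C, s)) - xs))) /=.
apply: eq_bigr => C _; rewrite mulr_sumr; apply: eq_bigr => s _.
by rewrite big_cons mulrA.
Qed.

Unset Implicit Arguments.

Theorem mainTheorem5 (R : realType) (d n : nat)
  (f : 'I_n -> 'rV[R]_d -> R) (gf : 'I_n -> 'rV[R]_d -> 'rV[R]_d)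
  (mu : 'I_n -> R) (xs : 'rV[R]_d)
  (pS : {set 'I_n} -> R)
  (gamma : R) (prox : {set 'I_n} -> 'rV[R]_d -> 'rV[R]_d)
  (x0 : 'rV[R]_d) (k : nat) :
  (forall i, has_gradient (f i) (gf i)) ->
  (forall i, 0 < mu i) ->
  (forall i, strongly_convex (f i) (gf i) (mu i)) ->
  (* xs minimizes f = (1/n) sum_i f_i *)
  (forall x, n%:R^-1 * \sum_i f i xs <= n%:R^-1 * \sum_i f i x) ->
  (* pS is a probability distribution on subsets of [n] *)
  (forall C, 0 <= pS C) -> \sum_(C : {set 'I_n}) pS C = 1 ->
  (* proper and nonvacuous *)
  (forall i, 0 < incl_prob pS i) -> pS (finset.set0 : {set 'I_n}) = 0 ->
  0 < gamma ->
  (forall C y, is_prox (fC pS f C) gamma y (prox C y)) ->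
  expected_sqdist k pS prox x0 xs <=
    (1 + gamma * mu_AS pS mu)^-1 ^+ (2 * k) * sqnorm (x0 - xs)
    + gamma * sigma2_AS pS gf xs
      / (gamma * mu_AS pS mu ^+ 2 + 2 * mu_AS pS mu).
Proof.
move=> hg mu0 SC hmin pge s1 pp p0 g0 hprox.
have n0 := n_pos s1 p0.
have gz : forall u, dotv u (\sum_i gf i xs) = 0.
  apply: (grad_zero hg) => x.
  by have := hmin x; rewrite ler_pM2l // invr_gt0 ltr0n.
have St := step mu0 SC gz pge s1 pp p0 g0 hprox.
have m0 := muAS_gt0 mu0 pp p0 n0.
have s20 : 0 <= sigma2_AS pS gf xs.
  by rewrite sigma2E // sumr_ge0 // => C _; rewrite mulr_ge0 // sqnorm_ge0.
set m := mu_AS pS mu in m0 St *.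
set s2 := sigma2_AS pS gf xs in s20 St *.
set A := (1 + gamma * m)^-1 in St *.
set N := gamma * s2 / (gamma * m ^+ 2 + 2 * m).
have c0 : 0 < 1 + gamma * m by have := mulr_gt0 g0 m0; lra.
have D0 : 0 < gamma * m ^+ 2 + 2 * m.
  by have := mulr_gt0 g0 (mulr_gt0 m0 m0); rewrite expr2; lra.
have N0 : 0 <= N by rewrite /N divr_ge0 ?mulr_ge0 //; lra.
have A0 : 0 <= A by rewrite /A invr_ge0; lra.
have key : A ^+ 2 * (gamma ^+ 2 * s2) = N * (1 - A ^+ 2).
  rewrite /N /A; field.
  by apply/andP; split; apply: lt0r_neq0.
suff H : forall k x, expected_sqdist k pS prox x xs <=
    A ^+ (2 * k) * sqnorm (x - xs) + N - N * A ^+ (2 * k).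
  have := H k x0; have : 0 <= N * A ^+ (2 * k) by rewrite mulr_ge0 // exprn_ge0.
  lra.
elim => [|j IH] x.
  rewrite /expected_sqdist (eq_bigr (fun _ => sqnorm (x - xs))); last first.
    by move=> s _; rewrite (tuple0 s) big_nil mul1r.
  rewrite sumr_const card_tuple expn0 mulr1n muln0 expr0 mul1r mulr1; lra.
rewrite exp_succ.
set Q := A ^+ (2 * j).
have Q0 : 0 <= Q by rewrite exprn_ge0.
apply: (@le_trans _ _ (\sum_(C : {set 'I_n})
   (Q * (pS C * sqnorm (prox C x - xs)) + (N - N * Q) * pS C))).
  apply: ler_sum => C _.
  have := ler_wpM2l (pge C) (IH (prox C x)).
  move/le_trans; apply; rewrite le_eqVlt; apply/orP; left; apply/eqP.
  rewrite -/Q; ring.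
rewrite big_split /= -!mulr_sumr s1 mulr1.
have := ler_wpM2l Q0 (St x).
rewrite (_ : A ^+ (2 * j.+1) = Q * A ^+ 2); last by rewrite mulnS exprD mulrC.
have key' := congr1 (fun z => Q * z) key; simpl in key'.
lra.
Qed.
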